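(* Let $M>0$, $g>0$, $U_{max}>0$ and $\epsilon>0$, and set $\gamma=\dfrac{\pi}{2\arctan(\epsilon U_{max})}$. For $f\in\mathbb{R}$ define $\bar\theta(f)=\sigma_{\pi/2}\big(\gamma\arctan(\epsilon f)\big)$ and $u_1(f)=\dfrac{f}{\sin\bar\theta(f)}$ for $f\neq 0$, $u_1(0)=\dfrac{1}{\gamma\epsilon}$. Let $\bar\alpha\in[0,\pi]$ be any steady-state inclination with $|Mg\cos\bar\alpha|\le U_{max}$, and let $\bar f_t=Mg\cos\bar\alpha$ be the corresponding steady-state tangential force. Then the steady-state thrust $\bar u_1=u_1(\bar f_t)$ satisfies $|\bar u_1|\le U_{max}$.
   Context: The saturation function is $\sigma_\lambda(x)=\operatorname{sign}(x)\min(|x|,\lambda)$ for $\lambda\ge 0$. Setting: a planar rigid object of inclination $\alpha$ (w.r.t. the horizon) is carried at one end by a ground vehicle and at the other end by a quadrotor producing thrust $u_1$ with constraint $0\le u_1\le U_{max}$; $M$ is the apparent mass of UAV and object and $g$ the gravitational acceleration. At an equilibrium with inclination $\bar\alpha$ the controller demands the tangential force $\bar f_t=Mg\cos\bar\alpha$, which is produced by choosing the relative UAV attitude $\bar\theta(\bar f_t)$ and thrust $u_1(\bar f_t)=\bar f_t/\sin\bar\theta(\bar f_t)$ (so that $u_1\sin\bar\theta=\bar f_t$). *)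

(* Defs.v *)
From Stdlib Require Import Reals Lra.
Open Scope R_scope.

Definition sat (lambda x : R) : R :=
  if Rlt_dec 0 x then Rmin x lambda
  else if Rlt_dec x 0 then - Rmin (- x) lambda
  else 0.

Definition gamma_ (eps Umax : R) : R := PI / (2 * atan (eps * Umax)).

Definition theta_bar (eps Umax f : R) : R :=
  sat (PI / 2) (gamma_ eps Umax * atan (eps * f)).

Definition u1 (eps Umax f : R) : R :=
  if Req_EM_T f 0 then 1 / (gamma_ eps Umax * eps)
  else f / sin (theta_bar eps Umax f).

(* Main.v *)
Require Import Defs.
From Stdlib Require Import Reals Lra.
Open Scope R_scope.

Lemma concave_ratio (g d : R -> R) b x : 0 < x <= b -> g 0 = 0 ->
  (forall c, 0 <= c <= b -> derivable_pt_lim g c (d c)) ->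
  (forall u v, 0 <= u <= v -> v <= b -> d v <= d u) ->
  x * g b <= b * g x.
Proof.
  intros [Hx Hxb] H0 Hd Hdec.
  destruct (Req_dec x b) as [->|Hne]; [lra|].
  destruct (MVT_cor2 g d 0 x Hx) as [c1 [E1 [C1a C1b]]].
  { intros c Hc; apply Hd; lra. }
  destruct (MVT_cor2 g d x b) as [c2 [E2 [C2a C2b]]]; [lra| |].
  { intros c Hc; apply Hd; lra. }
  assert (Hle : d c2 <= d c1) by (apply Hdec; lra).
  rewrite H0 in E1.
  assert (g b = g x + d c2 * (b - x)) by lra.
  assert (g x = d c1 * x) by lra.
  rewrite H, H1.
  assert (x * (b - x) * (d c2 - d c1) <= 0).
  { assert (0 <= x * (b - x)) by nra. nra. }
  nra.
Qed.

Lemma atan_pos x : 0 < x -> 0 < atan x.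
Proof. intro; rewrite <- atan_0; now apply atan_increasing. Qed.

Lemma key eps Umax a : 0 < eps -> 0 < Umax -> 0 < a <= Umax ->
  let y := gamma_ eps Umax * atan (eps * a) in
  0 < y <= PI / 2 /\ a <= Umax * sin y.
Proof.
  intros He HU Ha y.
  pose proof PI2_1 as HPI.
  assert (A1 : 0 < atan (eps * a)) by (apply atan_pos; nra).
  assert (A2 : 0 < atan (eps * Umax)) by (apply atan_pos; nra).
  assert (A3 : eps * a * atan (eps * Umax) <= eps * Umax * atan (eps * a)).
  { apply (concave_ratio atan (fun c => / (1 + c ^ 2))).
    - split; nra.
    - apply atan_0.
    - intros; apply derivable_pt_lim_atan.
    - intros u v Hu Hv. apply Rinv_le_contravar; nra. }
  set (t := atan (eps * a) / atan (eps * Umax)).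
  assert (Hy : y = t * (PI / 2)).
  { unfold y, t, gamma_. field. lra. }
  assert (Ht : a / Umax <= t).
  { unfold t. apply (Rmult_le_reg_r (Umax * atan (eps * Umax))). nra.
    field_simplify; try lra. apply (Rmult_le_reg_l eps); [lra|]. nra. }
  assert (Ht1 : t <= 1).
  { unfold t. apply (Rmult_le_reg_r (atan (eps * Umax))); [lra|].
    field_simplify; try lra.
    destruct (Req_dec a Umax) as [->|]; [lra|].
    left; apply atan_increasing; nra. }
  assert (Ht0 : 0 < t) by (unfold t; apply Rdiv_lt_0_compat; lra).
  assert (S : t * (PI / 2) * sin (PI / 2) <= PI / 2 * sin (t * (PI / 2))).
  { apply (concave_ratio sin cos).
    - split; nra.
    - apply sin_0.
    - intros; apply derivable_pt_lim_sin.
    - intros u v Hu Hv; apply cos_decr_1; lra. }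
  rewrite sin_PI2 in S.
  split. rewrite Hy; split; nra.
  rewrite Hy.
  assert (t <= sin (t * (PI / 2))) by nra.
  apply (Rmult_le_reg_r (/ Umax)). apply Rinv_0_lt_compat; lra.
  replace (Umax * sin (t * (PI / 2)) * / Umax) with (sin (t * (PI / 2))) by (field; lra).
  unfold Rdiv in Ht; lra.
Qed.

Theorem lemma2 (M g Umax eps alpha_bar : R) :
  0 < M -> 0 < g -> 0 < Umax -> 0 < eps ->
  0 <= alpha_bar <= PI ->
  Rabs (M * g * cos alpha_bar) <= Umax ->
  Rabs (u1 eps Umax (M * g * cos alpha_bar)) <= Umax.
Proof.
  intros HM Hg HU He Ha Hf.
  set (f := M * g * cos alpha_bar) in *.
  pose proof PI2_1 as HPI.
  unfold u1.
  destruct (Req_EM_T f 0) as [Hf0|Hf0].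
  - assert (A2 : 0 < atan (eps * Umax)) by (apply atan_pos; nra).
    assert (A3 : atan (eps * Umax) <= eps * Umax).
    { destruct (MVT_cor2 atan (fun c => / (1 + c ^ 2)) 0 (eps * Umax)) as [c [E [C1 C2]]].
      nra. intros; apply derivable_pt_lim_atan.
      rewrite atan_0 in E.
      assert (/ (1 + c ^ 2) <= 1).
      { rewrite <- Rinv_1. apply Rinv_le_contravar; nra. }
      nra. }
    replace (1 / (gamma_ eps Umax * eps)) with (2 * atan (eps * Umax) / (PI * eps))
      by (unfold gamma_; field; lra).
    rewrite Rabs_right.
    2: { apply Rle_ge; left; apply Rdiv_lt_0_compat; nra. }
    apply (Rmult_le_reg_r (PI * eps)); [nra|].
    field_simplify; try lra. nra.
  - destruct (Rlt_dec 0 f) as [Hp|Hn].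
    + rewrite Rabs_right in Hf by lra.
      destruct (key eps Umax f He HU (conj Hp Hf)) as [[Y1 Y2] Y3].
      unfold theta_bar, sat.
      destruct (Rlt_dec 0 (gamma_ eps Umax * atan (eps * f))); [|lra].
      rewrite Rmin_left by lra.
      set (y := gamma_ eps Umax * atan (eps * f)) in *.
      assert (0 < sin y) by (apply sin_gt_0; lra).
      rewrite Rabs_right by (apply Rle_ge; left; apply Rdiv_lt_0_compat; lra).
      apply (Rmult_le_reg_r (sin y)); [lra|].
      field_simplify; lra.
    + assert (Hneg : f < 0) by lra.
      rewrite Rabs_left in Hf by lra.
      assert (Hpf : 0 < - f) by lra.
      destruct (key eps Umax (- f) He HU (conj Hpf Hf)) as [[Y1 Y2] Y3].
      unfold theta_bar, sat.
      replace (eps * f) with (- (eps * - f)) by ring.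
      rewrite atan_opp.
      set (y := gamma_ eps Umax * atan (eps * - f)) in *.
      replace (gamma_ eps Umax * - atan (eps * - f)) with (- y) by (unfold y; ring).
      destruct (Rlt_dec 0 (- y)); [lra|].
      destruct (Rlt_dec (- y) 0); [|lra].
      rewrite Ropp_involutive, Rmin_left by lra.
      rewrite sin_neg.
      assert (0 < sin y) by (apply sin_gt_0; lra).
      replace (f / - - sin y) with (f / sin y) by (field; lra).
      replace (f / - sin y) with (- f / sin y) by (field; lra).
      rewrite Rabs_right by (apply Rle_ge; left; apply Rdiv_lt_0_compat; lra).
      apply (Rmult_le_reg_r (sin y)); [lra|].
      field_simplify; lra.
Qed.
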